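(* Assume $\mathcal E=\emptyset$, $K$ has nonempty interior, and all $f_i$ ($i=1,\ldots,m$) and $-c_j$ ($j\in\mathcal I$) are SOS-convex polynomials. Let $d$ be the maximum degree of the $f_i$ and $d_0=\max\{\lceil d/2\rceil,\ \lceil\deg(c_j)/2\rceil\ (j\in\mathcal I)\}$. Then the interior of $\mathcal U$ equals $$\mathcal V_1=\Big\{(v_1,\ldots,v_m):\ \exists\, y\in\mathbb R^{\mathbb N^n_{2d_0}} \text{ with } y_0=1,\ M_{d_0}[y]\succeq 0,\ \langle c_j,y\rangle\ge0\ (j\in\mathcal I),\ v_i>\langle f_i,y\rangle\ (i\in[m])\Big\}.$$ Moreover, a vector $v\in f(K)$ is a weakly Pareto value if and only if it lies on the boundary of the closure of $\mathcal V_1$.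
   Context: $f_1,\ldots,f_m,c_j$ ($j\in\mathcal I$) are real polynomials in $x\in\mathbb R^n$, $K=\{x: c_j(x)\ge0\ (j\in\mathcal I)\}$, $\mathcal U=f(K)+\mathbb R^m_+$ where $f=(f_1,\ldots,f_m)$. A point $x^*\in K$ is weakly Pareto if no $x\in K$ has $f_i(x)<f_i(x^* )$ for all $i$; a weakly Pareto value is $f(x^* )$ for such $x^*$. A polynomial $p$ is SOS-convex if its Hessian satisfies $\nabla^2p(x)=Q(x)^TQ(x)$ for some matrix polynomial $Q$. For $y=(y_\alpha)_{\alpha\in\mathbb N^n_{2k}}$ (with $\mathbb N^n_{t}=\{\alpha\in\mathbb N^n:|\alpha|\le t\}$) and polynomial $p=\sum p_\alpha x^\alpha$ of degree $\le 2k$, $\langle p,y\rangle=\sum_\alpha p_\alpha y_\alpha$; $y_0$ is the entry at $\alpha=0$; the moment matrix $M_k[y]$ is the symmetric matrix indexed by $\alpha,\beta\in\mathbb N^n_k$ with $(\alpha,\beta)$ entry $y_{\alpha+\beta}$. $[m]=\{1,\ldots,m\}$. *)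

(* Defs.v *)
From HB Require Import structures.
From mathcomp Require Import all_boot all_order all_algebra.
From mathcomp Require Import reals.
From mathcomp Require Import mpoly.
Set Implicit Arguments. Unset Strict Implicit. Unset Printing Implicit Defensive.
Import Order.TTheory GRing.Theory Num.Theory.
Local Open Scope ring_scope.

Section Defs.
Variable R : realType.

Definition box {I : finType} (v : I -> R) (e : R) : (I -> R) -> Prop :=
  fun w => forall i, `|w i - v i| < e.

Definition interiorR {I : finType} (S : (I -> R) -> Prop) : (I -> R) -> Prop :=
  fun v => exists2 e : R, 0 < e & forall w, box v e w -> S w.

Definition closureR {I : finType} (S : (I -> R) -> Prop) : (I -> R) -> Prop :=
  fun v => forall e : R, 0 < e -> exists w, box v e w /\ S w.

Definition boundaryR {I : finType} (S : (I -> R) -> Prop) : (I -> R) -> Prop :=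
  fun v => closureR S v /\ ~ interiorR S v.

Variable n : nat.

(* total degree (deg 0 = 0) *)
Definition pdeg (p : {mpoly R[n]}) : nat := (msize p).-1.

Definition hessian (p : {mpoly R[n]}) : 'M[{mpoly R[n]}]_n :=
  \matrix_(i, j) mderiv i (mderiv j p).

Definition sos_convex (p : {mpoly R[n]}) : Prop :=
  exists (r : nat) (Q : 'M[{mpoly R[n]}]_(r, n)), hessian p = Q^T *m Q.

Definition mvec (k : nat) := 'X_{1..n < (2 * k).+1} -> R.

(* <p, y> = sum_alpha p_alpha y_alpha  (for deg p <= 2k) *)
Definition mpair (k : nat) (p : {mpoly R[n]}) (y : mvec k) : R :=
  \sum_(a : 'X_{1..n < (2 * k).+1}) p@_(a : 'X_{1..n}) * y a.

Definition mzero (k : nat) (y : mvec k) : R := y bm0.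

(* alpha + beta, for |alpha|, |beta| <= k, as an index of N^n_{2k} *)
Definition madd_idx (k : nat) (a b : 'X_{1..n < k.+1}) : 'X_{1..n < (2 * k).+1} :=
  insubd bm0 ((a : 'X_{1..n}) + (b : 'X_{1..n}))%MM.

Definition moment_matrix (k : nat) (y : mvec k) :
  'M[R]_#|{: 'X_{1..n < k.+1}}| :=
  \matrix_(i, j) y (madd_idx (enum_val i) (enum_val j)).

Definition psd (N : nat) (M : 'M[R]_N) : Prop :=
  forall u : 'cV[R]_N, 0 <= (u^T *m M *m u) 0 0.

End Defs.

Section Problem.
Variables (R : realType) (n m p : nat).
Variables (f : 'I_m -> {mpoly R[n]}) (c : 'I_p -> {mpoly R[n]}).

Definition fval (x : 'I_n -> R) : 'I_m -> R := fun i => (f i).@[x].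

Definition Kset : ('I_n -> R) -> Prop := fun x => forall j, 0 <= (c j).@[x].

Definition Uset : ('I_m -> R) -> Prop :=
  fun v => exists2 x, Kset x & forall i, fval x i <= v i.

Definition weakly_pareto (xs : 'I_n -> R) : Prop :=
  Kset xs /\ ~ (exists2 x, Kset x & forall i, fval x i < fval xs i).

Definition weakly_pareto_value (v : 'I_m -> R) : Prop :=
  exists2 xs, weakly_pareto xs & fval xs = v.

Definition dmax : nat := \max_(i < m) pdeg (f i).

Definition d0 : nat := maxn (uphalf dmax) (\max_(j < p) uphalf (pdeg (c j))).

Definition V1 : ('I_m -> R) -> Prop :=
  fun v => exists y : mvec R n d0,
    [/\ mzero y = 1, psd (moment_matrix y),
        forall j, 0 <= mpair (c j) y
      & forall i, mpair (f i) y < v i].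

End Problem.

(* Main.v *)
Require Import Defs.
From HB Require Import structures.
From mathcomp Require Import all_boot all_order all_algebra.
From mathcomp Require Import reals.
From mathcomp Require Import mpoly.
From mathcomp Require Import polyrcf.
From mathcomp Require Import zify ring lra.
Import Order.TTheory GRing.Theory Num.Theory.
Local Open Scope ring_scope.
Set Implicit Arguments. Unset Strict Implicit. Unset Printing Implicit Defensive.
Require Import Defs.
From HB Require Import structures.
From mathcomp Require Import all_boot all_order all_algebra.
From mathcomp Require Import reals.
From mathcomp Require Import mpoly.
From mathcomp Require Import polyrcf.
Import Order.TTheory GRing.Theory Num.Theory.
Local Open Scope ring_scope.
Set Implicit Arguments. Unset Strict Implicit. Unset Printing Implicit Defensive.
Section Lin.
Variables (R : realType) (n k : nat) (y : mvec R n k).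
Local Notation L p := (mpair p y).

Lemma mpairD p q : L (p + q) = L p + L q.
Proof. by rewrite /mpair -big_split; apply: eq_bigr => a _; rewrite mcoeffD mulrDl. Qed.
Lemma mpairZ a p : L (a *: p) = a * L p.
Proof. by rewrite /mpair mulr_sumr; apply: eq_bigr => b _; rewrite mcoeffZ mulrA. Qed.
Lemma mpair0 : L 0 = 0.
Proof. by rewrite /mpair big1 // => a _; rewrite mcoeff0 mul0r. Qed.
Lemma mpairN p : L (- p) = - L p.
Proof. by rewrite -scaleN1r mpairZ mulN1r. Qed.
Lemma mpairB p q : L (p - q) = L p - L q.
Proof. by rewrite mpairD mpairN. Qed.
Lemma mpair_sum I (r : seq I) (P : pred I) (F : I -> {mpoly R[n]}) :
  L (\sum_(i <- r | P i) F i) = \sum_(i <- r | P i) L (F i).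
Proof.
elim/big_rec2: _ => [|i x p _ <-]; first exact: mpair0.
by rewrite mpairD.
Qed.

Lemma mpairX (mu : 'X_{1..n}) (h : (mdeg mu < (2 * k).+1)%N) :
  L 'X_[mu] = y (BMultinom h).
Proof.
rewrite /mpair (bigD1 (BMultinom h)) //= mcoeffX eqxx mul1r big1 ?addr0 //.
move=> a /eqP ne; rewrite mcoeffX; case: eqP => [e|_]; last by rewrite mul0r.
by exfalso; apply: ne; apply/val_inj; rewrite /= e.
Qed.

Lemma mpairC c : L c%:MP = c * mzero y.
Proof.
rewrite -[c%:MP]mulr1 mul_mpolyC -mpolyX0 mpairZ.
by rewrite (mpairX (bm0_proof _ _)).
Qed.
End Lin.

Section Sq.
Variables (R : realType) (n k : nat) (y : mvec R n k).
Local Notation L p := (mpair p y).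

Lemma mpair_sq (a : {mpoly R[n]}) : (msize a <= k.+1)%N ->
  L (a * a) = \sum_(i : 'X_{1..n < k.+1}) \sum_(j : 'X_{1..n < k.+1})
                 a@_i * a@_j * y (madd_idx i j).
Proof.
move=> ha; rewrite (mpolywME (k := k.+1)) // mpair_sum [RHS]pair_bigA /=.
apply: eq_bigr => [[i j]] _ /=.
have h : (mdeg (i + j)%MM < (2 * k).+1)%N.
  rewrite mdegD; have := bmdeg i; have := bmdeg j; rewrite !ltnS; lia.
rewrite mpairZ (mpairX y h); congr (_ * y _); apply/val_inj.
by rewrite /madd_idx /= insubdK.
Qed.

Lemma psd_quad N (M : 'M[R]_N) (u : 'I_N -> R) : psd M ->
  0 <= \sum_i \sum_j u i * u j * M i j.
Proof.
move=> /(_ (\col_i u i)); rewrite !mxE; congr (0 <= _).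
rewrite exchange_big; apply: eq_bigr => j _; rewrite mxE big_distrl /=.
by apply: eq_bigr => i _; rewrite !mxE; rewrite mulrAC.
Qed.

Lemma mpair_sq_ge0 (a : {mpoly R[n]}) : psd (moment_matrix y) ->
  (msize a <= k.+1)%N -> 0 <= L (a * a).
Proof.
move=> hp ha; rewrite mpair_sq //.
have := psd_quad (fun i => a@_(enum_val i : 'X_{1..n < k.+1})) hp.
congr (0 <= _).
rewrite (reindex (fun i : 'I_#|{: 'X_{1..n < k.+1}}| => enum_val i)) /=; last first.
  by apply: onW_bij; apply: enum_val_bij.
apply: eq_bigr => i _.
rewrite (reindex (fun i : 'I_#|{: 'X_{1..n < k.+1}}| => enum_val i)) /=; last first.
  by apply: onW_bij; apply: enum_val_bij.
by apply: eq_bigr => j _; rewrite mxE.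
Qed.
End Sq.

Section SOSdeg.
Variables (R : realType) (n : nat).

Lemma msize_lead_le (p : {mpoly R[n]}) (M : 'X_{1..n}) d :
  (mlead p <= M)%O -> (mdeg M <= d)%N -> (msize p <= d.+1)%N.
Proof.
move=> hle hM; have [->|nz] := eqVneq p 0; first by rewrite msize0.
rewrite -mlead_deg // ltnS; apply: leq_trans hM; exact: lemc_mdeg.
Qed.

Lemma sos_deg (r : nat) (F : 'I_r -> {mpoly R[n]}) d :
  (msize (\sum_i F i * F i) <= (2 * d).+1)%N -> forall i, (msize (F i) <= d.+1)%N.
Proof.
move=> hs i0.
case: (@arg_maxP _ _ _ i0 predT (fun j => mlead (F j)) isT) => j0 _ Hmax.
have [F0|Fnz] := eqVneq (F j0) 0.
  apply: (msize_lead_le (M := 0%MM)); last by rewrite mdeg0.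
  by have := Hmax i0 isT; rewrite F0 mlead0.
set M := mlead (F j0).
have hc : (\sum_i F i * F i)@_(M + M)%MM = \sum_i (F i)@_M * (F i)@_M.
  rewrite raddf_sum /=; apply: eq_bigr => j _.
  by apply: mleadcMW; apply: Hmax.
have hpos : 0 < \sum_i (F i)@_M * (F i)@_M.
  rewrite (bigD1 j0) //=.
  have h1 : 0 < (F j0)@_M * (F j0)@_M.
    have hn : (F j0)@_M != 0 by rewrite /M mleadc_eq0.
    rewrite lt_def mulf_neq0 //=; nra.
  have h2 : 0 <= \sum_(i | i != j0) (F i)@_M * (F i)@_M.
    by apply: sumr_ge0 => i _; nra.
  lra.
have hsupp : (M + M)%MM \in msupp (\sum_i F i * F i).
  by rewrite mcoeff_msupp hc; apply/eqP => e; rewrite e in hpos; rewrite ltxx in hpos.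
have := leq_trans (msize_mdeg_lt hsupp) hs; rewrite mdegD ltnS => hMd.
apply: (msize_lead_le (M := M)); first exact: Hmax.
lia.
Qed.
End SOSdeg.

Definition hX (R : realType) (n : nat) (xb : 'I_n -> R) (i : 'I_n) : {mpoly R[n]} :=
  'X_i - (xb i)%:MP.
Definition gv (R : realType) (n : nat) (xb : 'I_n -> R) (i : 'I_n) : {poly {mpoly R[n]}} :=
  ((xb i)%:MP)%:P + 'X * (hX xb i)%:P.
Definition fC (R : realType) (n : nat) : {rmorphism R -> {poly {mpoly R[n]}}} :=
  polyC \o (@mpolyC n R).
HB.lock Definition Phi (R : realType) (n : nat) (xb : 'I_n -> R) (p : {mpoly R[n]})
  : {poly {mpoly R[n]}} := mmap (fC R n) (gv xb) p.

Section Chain.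
Variables (R : realType) (n : nat) (xb : 'I_n -> R).
Local Notation S := {mpoly R[n]}.
Local Notation Phi := (Phi xb).
Local Notation hX := (hX xb).
Local Notation gv := (gv xb).
Lemma PhiD p q : Phi (p + q) = Phi p + Phi q. Proof. rewrite unlock; exact: mmapD. Qed.
Lemma PhiM p q : Phi (p * q) = Phi p * Phi q. Proof. rewrite unlock; exact: rmorphM. Qed.
Lemma Phi1 : Phi 1 = 1. Proof. rewrite unlock; exact: rmorph1. Qed.
Lemma PhiZ c p : Phi (c *: p) = ((c%:MP)%:P) * Phi p. Proof. rewrite unlock; exact: mmapZ. Qed.
Lemma PhiC c : Phi (c%:MP) = (c%:MP)%:P. Proof. rewrite unlock; exact: mmapC. Qed.
Lemma PhiX i : Phi 'X_i = gv i. Proof. by rewrite unlock mmapX mmap1U. Qed.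
Lemma Phi0 : Phi 0 = 0. Proof. rewrite unlock; exact: mmap0. Qed.

Definition Pch (p : S) := (Phi p)^`() = \sum_i Phi (mderiv i p) * (hX i)%:P.

Lemma Pch_D p q : Pch p -> Pch q -> Pch (p + q).
Proof.
rewrite /Pch => hp hq; rewrite PhiD derivD hp hq -big_split /=.
by apply: eq_bigr => i _; rewrite mderivD PhiD mulrDl.
Qed.

Lemma Pch_M p q : Pch p -> Pch q -> Pch (p * q).
Proof.
rewrite /Pch => hp hq; rewrite PhiM derivM hp hq big_distrl big_distrr -big_split /=.
by apply: eq_bigr => i _; rewrite mderivM PhiD !PhiM mulrDl mulrAC mulrA.
Qed.

Lemma Pch_C c : Pch c%:MP.
Proof.
rewrite /Pch PhiC derivC big1 // => i _; by rewrite mderivC Phi0 mul0r.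
Qed.

Lemma Pch_Z c p : Pch p -> Pch (c *: p).
Proof.
move=> hp; rewrite -mul_mpolyC; apply: Pch_M => //; exact: Pch_C.
Qed.

Lemma Pch_X j : Pch 'X_j.
Proof.
rewrite /Pch PhiX /gv derivD derivC add0r derivM derivX derivC mulr0 addr0 mul1r.
rewrite (bigD1 j) //= big1 ?addr0.
  rewrite mderivX mnm1E eqxx scale1r.
  have -> : (U_(j) - U_(j))%MM = 0%MM by apply/mnmP => l; rewrite mnmBE mnm0E subnn.
  by rewrite mpolyX0 Phi1 mul1r.
move=> i ne; rewrite mderivX mnm1E.
have -> : (j == i) = false by apply/negbTE; rewrite eq_sym.
by rewrite scale0r Phi0 mul0r.
Qed.

Lemma Pch_all p : Pch p.
Proof.
have Pch1 : Pch 1 by exact: (Pch_C 1).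
have Pchm (m : 'X_{1..n}) : Pch 'X_[m].
  rewrite mpolyXE_id; apply: big_ind => //; first exact: Pch_M.
  move=> i _; elim: (m i) => [|k ih]; first by rewrite expr0.
  by rewrite exprS; apply: Pch_M => //; exact: Pch_X.
rewrite [p]mpolyE; apply: big_ind => //.
- by have := Pch_C 0; rewrite /Pch !Phi0.
- exact: Pch_D.
- by move=> m _; apply: Pch_Z.
Qed.

Lemma Phi_deriv p : (Phi p)^`() = \sum_i Phi (mderiv i p) * (hX i)%:P.
Proof. exact: Pch_all. Qed.

Lemma Phi_deriv2 p : (Phi p)^`()^`() =
  \sum_i \sum_j Phi (mderiv j (mderiv i p)) * (hX j)%:P * (hX i)%:P.
Proof.
rewrite Phi_deriv raddf_sum /=; apply: eq_bigr => i _.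
rewrite derivM derivC mulr0 addr0 Phi_deriv big_distrl /=.
by [].
Qed.
End Chain.

Section Msize.
Variables (R : realType) (n : nat).
Implicit Types (p q : {mpoly R[n]}).

Lemma msize_mul_le p q a b : (msize p <= a.+1)%N -> (msize q <= b.+1)%N ->
  (msize (p * q) <= (a + b).+1)%N.
Proof.
have [->|pn] := eqVneq p 0; first by rewrite mul0r msize0.
have [->|qn] := eqVneq q 0; first by rewrite mulr0 msize0.
rewrite (msizeM pn qn); have := msize_poly_eq0 p; have := msize_poly_eq0 q.
rewrite (negbTE pn) (negbTE qn) => /eqP h1 /eqP h2 ha hb; move: (msize p) (msize q) h1 h2 ha hb => x y; lia.
Qed.

Lemma msize_sum_le (I : Type) (r : seq I) (P : pred I) (F : I -> {mpoly R[n]}) d :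
  (forall i, P i -> (msize (F i) <= d)%N) -> (msize (\sum_(i <- r | P i) F i) <= d)%N.
Proof.
move=> h; apply: (big_ind (fun x => (msize x <= d)%N)) => //; first by rewrite msize0.
by move=> x y hx hy; apply: leq_trans (msizeD_le _ _) _; rewrite geq_max hx hy.
Qed.

Lemma msize_exp_le p a k : (msize p <= a.+1)%N -> (msize (p ^+ k) <= (a * k).+1)%N.
Proof.
move=> hp; elim: k => [|k ih]; first by rewrite expr0 msize1.
by rewrite exprS mulnS; apply: msize_mul_le.
Qed.

Lemma msize_prod_le (F : 'I_n -> {mpoly R[n]}) (d : 'I_n -> nat) :
  (forall i, (msize (F i) <= (d i).+1)%N) ->
  (msize (\prod_i F i) <= (\sum_i d i).+1)%N.
Proof.
move=> h; apply: (big_ind2 (fun x (y : nat) => (msize x <= y.+1)%N)) => //.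
- by rewrite msize1.
- by move=> x1 x2 y1 y2 hx hy; apply: msize_mul_le.
Qed.

Lemma msize_mderiv i p : (msize (mderiv i p) <= (msize p).-1)%N.
Proof.
set d := mderiv i p; have [->|dn] := eqVneq d 0; first by rewrite msize0.
have hs := mlead_supp dn; rewrite -(mlead_deg dn).
move: hs; rewrite mcoeff_msupp /d mcoeff_mderiv => hc.
have : (mlead d + U_(i))%MM \in msupp p.
  by rewrite mcoeff_msupp; apply: contraNneq hc => ->; rewrite mul0rn.
by move/msize_mdeg_lt; rewrite mdegD mdeg1 addn1 => h; rewrite -ltnS (ltn_predK h).
Qed.

Lemma msize_hX (xb : 'I_n -> R) i (t : R) :
  (msize ((xb i)%:MP + t%:MP * ('X_i - (xb i)%:MP)) <= 2)%N.
Proof.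
apply: leq_trans (msizeD_le _ _) _; rewrite geq_max; apply/andP; split.
  by rewrite msizeC; case: (_ != 0).
rewrite mul_mpolyC; apply: leq_trans (msizeZ_le _ _) _.
apply: leq_trans (msizeD_le _ _) _; rewrite geq_max msizeN msizeX mdeg1 leqnn /=.
by rewrite msizeC; case: (_ != 0).
Qed.
End Msize.

Section MmapNat.
Lemma mmap_ext (n : nat) (R S : nzRingType) (f1 f2 : R -> S) (h1 h2 : 'I_n -> S) p :
  f1 =1 f2 -> h1 =1 h2 -> mmap f1 h1 p = mmap f2 h2 p.
Proof.
move=> ef eh; rewrite /mmap; apply: eq_bigr => m _; rewrite ef; congr (_ * _).
by apply: mmap1_eq.
Qed.

Lemma mmap_rmorph (n : nat) (R : nzRingType) (S1 S2 : comNzRingType)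
  (rho : {rmorphism S1 -> S2}) (f : R -> S1) (h : 'I_n -> S1) p :
  rho (mmap f h p) = mmap (rho \o f) (rho \o h) p.
Proof.
rewrite /mmap rmorph_sum; apply: eq_bigr => m _; rewrite rmorphM /=; congr (_ * _).
by rewrite /mmap1 rmorph_prod; apply: eq_bigr => i _; rewrite rmorphXn.
Qed.
End MmapNat.

Section Eval.
Variables (R : realType) (n : nat) (xb : 'I_n -> R).
Definition lin (t : R) (i : 'I_n) : {mpoly R[n]} :=
  (xb i)%:MP + t%:MP * ('X_i - (xb i)%:MP).

Lemma E_mmap t p : (Phi xb p).[t%:MP] = mmap (@mpolyC n R) (lin t) p.
Proof.
rewrite unlock -horner_evalE (mmap_rmorph (horner_eval (t%:MP))).
apply: mmap_ext => [c|i] /=; rewrite horner_evalE.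
  by rewrite /fC /= hornerC.
by rewrite /gv /lin /hX !hornerE.
Qed.

Lemma E1 p : (Phi xb p).[1%:MP] = p.
Proof.
rewrite E_mmap -[RHS]comp_mpoly_id /comp_mpoly; apply: mmap_ext => // i.
by rewrite tnth_mktuple /lin mul1r addrC subrK.
Qed.

Lemma E0 p : (Phi xb p).[0%:MP] = (p.@[xb])%:MP.
Proof.
rewrite E_mmap /meval (mmap_rmorph (@mpolyC n R)).
by apply: mmap_ext => [c|i] //=; rewrite /lin mul0r addr0.
Qed.

Lemma Edeg t p : (msize ((Phi xb p).[t%:MP]) <= msize p)%N.
Proof.
rewrite E_mmap (mmapE (msize p)) //; apply: msize_sum_le => m _.
rewrite mul_mpolyC; apply: leq_trans (msizeZ_le _ _) _.
apply: leq_trans (bmdeg m); rewrite mdegE /mmap1.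
apply: (msize_prod_le (d := fun i => m i)) => i.
by have := msize_exp_le (m i) (msize_hX xb i t); rewrite mul1n.
Qed.
End Eval.

Section LPsec.
Variables (R : realType) (n k : nat) (y : mvec R n k).
Local Notation L p := (mpair p y).

Definition LP (P : {poly {mpoly R[n]}}) : {poly R} := \poly_(i < size P) L (P`_i).

Lemma coef_LP P i : (LP P)`_i = L (P`_i).
Proof.
rewrite coef_poly; case: ltnP => h //.
by rewrite nth_default // mpair0.
Qed.

Lemma mpairMn p m : L (p *+ m) = L p *+ m.
Proof. by elim: m => [|m ih]; rewrite ?mulr0n ?mpair0 // !mulrS mpairD ih. Qed.

Lemma LP_deriv P : (LP P)^`() = LP (P^`()).
Proof. by apply/polyP => i; rewrite coef_deriv !coef_LP coef_deriv mpairMn. Qed.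

Lemma LP_horner P t : (LP P).[t] = L (P.[t%:MP]).
Proof.
rewrite (horner_coef_wide _ (size_poly _ _)) horner_coef mpair_sum.
apply: eq_bigr => i _; rewrite coef_LP -rmorphXn /= [_ * (t ^+ i)%:MP]mulrC mul_mpolyC mpairZ.
by rewrite mulrC.
Qed.
End LPsec.

Lemma mvt_conv (R : realType) (phi : {poly R}) :
  phi^`().[0] = 0 -> (forall t, 0 <= phi^`()^`().[t]) -> phi.[0] <= phi.[1].
Proof.
move=> h0 h2.
have [c hc e1] := poly_mvt phi (@ltr01 R).
have c0 : 0 < c by move: hc; rewrite in_itv /= => /andP[].
have [c' _ e2] := poly_mvt phi^`() c0.
have : 0 <= phi^`().[c] by have := h2 c'; rewrite h0 in e2; nra.
move: e1; rewrite subr0 mulr1 => e1; lra.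
Qed.

Section Jensen.
Variables (R : realType) (n : nat).

Lemma msize_hX0 (xb : 'I_n -> R) i : (msize (hX xb i) <= 2)%N.
Proof.
rewrite /hX; apply: leq_trans (msizeD_le _ _) _; rewrite geq_max msizeN msizeX mdeg1 leqnn /=.
by rewrite msizeC; case: (_ != 0).
Qed.

Lemma jensen k (y : mvec R n k) (g : {mpoly R[n]}) :
  mzero y = 1 -> psd (moment_matrix y) -> (msize g <= (2 * k).+1)%N ->
  sos_convex g -> g.@[fun i => mpair 'X_i y] <= mpair g y.
Proof.
move=> hy0 hpsd hg [r [Q hQ]].
set xb := fun i => mpair 'X_i y.
pose phi := LP y (Phi xb g).
have h1 : phi.[1] = mpair g y by rewrite LP_horner E1.
have h0 : phi.[0] = g.@[xb] by rewrite LP_horner E0 mpairC hy0 mulr1.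
have hd0 : phi^`().[0] = 0.
  rewrite LP_deriv LP_horner Phi_deriv horner_sum mpair_sum big1 // => i _.
  rewrite hornerM hornerC E0 mul_mpolyC mpairZ.
  have -> : mpair (hX xb i) y = 0 by rewrite /hX mpairB mpairC hy0 mulr1 subrr.
  by rewrite mulr0.
have hd2 : forall t, 0 <= phi^`()^`().[t].
  move=> t; rewrite !LP_deriv LP_horner Phi_deriv2.
  pose E := fun q => mmap (@mpolyC n R) (lin xb t) q.
  have eE q : (Phi xb q).[t%:MP] = E q by rewrite E_mmap.
  pose a l := \sum_i E (Q l i) * hX xb i.
  have key : (\sum_i \sum_j Phi xb (mderiv j (mderiv i g)) * (hX xb j)%:P
                 * (hX xb i)%:P).[t%:MP] = \sum_l a l * a l.
    rewrite horner_sum.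
    transitivity (\sum_i \sum_j \sum_l E (Q l j) * E (Q l i) * hX xb j * hX xb i).
      apply: eq_bigr => i _; rewrite horner_sum; apply: eq_bigr => j _.
      rewrite !hornerM !hornerC eE.
      have -> : mderiv j (mderiv i g) = hessian g j i by rewrite /hessian mxE.
      rewrite hQ !mxE /E rmorph_sum /= !big_distrl /=; apply: eq_bigr => l _.
      by rewrite rmorphM !mxE.
    rewrite exchange_big /=; under eq_bigr do rewrite exchange_big /=.
    rewrite exchange_big /=; apply: eq_bigr => l _.
    rewrite /a big_distrl /=; apply: eq_bigr => j _.
    rewrite big_distrr /=; apply: eq_bigr => i _.
    by rewrite !mulrA; congr (_ * _); rewrite mulrAC.
  have hdeg : (msize (\sum_l a l * a l) <= (2 * k).+1)%N.
    rewrite -key horner_sum; apply: msize_sum_le => i _.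
    rewrite horner_sum; apply: msize_sum_le => j _.
    rewrite !hornerM !hornerC.
    have hE := Edeg xb t (mderiv j (mderiv i g)).
    have hm1 := msize_mderiv i g; have hm2 := msize_mderiv j (mderiv i g).
    set e := (Phi xb _).[_] in hE *.
    have [->|en] := eqVneq e 0; first by rewrite !mul0r msize0.
    have es : msize e = (msize e).-1.+1.
      by rewrite prednK // lt0n msize_poly_eq0.
    have hej : (msize (e * hX xb j) <= ((msize e).-1 + 1).+1)%N.
      by apply: msize_mul_le (msize_hX0 xb j); rewrite -es.
    apply: leq_trans (msize_mul_le hej (msize_hX0 xb i)) _.
    move: es hE hm1 hm2 hg; move: (msize e) (msize g) (msize (mderiv i g))
      (msize (mderiv j (mderiv i g))) => x1 x2 x3 x4.
    rewrite -!subn1; lia.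
  rewrite key mpair_sum; apply: sumr_ge0 => l _; apply: mpair_sq_ge0 => //.
  exact: (sos_deg hdeg l).
rewrite -h0 -h1; exact: mvt_conv.
Qed.
End Jensen.

Section Main.
Variables (R : realType) (n m p : nat).
Variables (f : 'I_m -> {mpoly R[n]}) (c : 'I_p -> {mpoly R[n]}).

Definition Sset (v : 'I_m -> R) : Prop :=
  exists2 x, Kset c x & forall i, fval f x i < v i.

Lemma msize_f i : (msize (f i) <= (2 * d0 f c).+1)%N.
Proof.
have h1 : (pdeg (f i) <= dmax f)%N := @leq_bigmax _ (fun i => pdeg (f i)) i.
have h2 : (uphalf (dmax f) <= d0 f c)%N by rewrite leq_maxl.
move: h1 h2; rewrite /pdeg; move: (msize (f i)) (dmax f) (d0 f c) => a b d; lia.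
Qed.

Lemma msize_c j : (msize (c j) <= (2 * d0 f c).+1)%N.
Proof.
have h1 : (uphalf (pdeg (c j)) <= \max_(j < p) uphalf (pdeg (c j)))%N.
  exact (@leq_bigmax _ (fun j => uphalf (pdeg (c j))) j).
have h2 : (\max_(j < p) uphalf (pdeg (c j)) <= d0 f c)%N by rewrite leq_maxr.
move: h1 h2; rewrite /pdeg; move: (msize (c j)) (\max_(j < p) uphalf (pdeg (c j))) (d0 f c) => a b d; lia.
Qed.

Lemma V1_S v : (forall i, sos_convex (f i)) -> (forall j, sos_convex (- c j)) ->
  V1 f c v -> Sset v.
Proof.
move=> hf hc [y [hy0 hpsd hcy hfy]].
exists (fun i => mpair 'X_i y).
  move=> j; have := jensen hy0 hpsd _ (hc j).
  rewrite msizeN mevalN mpairN => /(_ (msize_c j)) h.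
  have := hcy j; lra.
move=> i; have := jensen hy0 hpsd (msize_f i) (hf i).
by rewrite /fval => h; apply: le_lt_trans h (hfy i).
Qed.

Lemma psd_rank1 N (M : 'M[R]_N) (w : 'I_N -> R) :
  (forall i j, M i j = w i * w j) -> psd M.
Proof.
move=> hM u; rewrite !mxE.
have -> : \sum_j (u^T *m M) 0 j * u j 0 = (\sum_i u i 0 * w i) * (\sum_i u i 0 * w i).
  rewrite big_distrr /=; apply: eq_bigr => j _; rewrite !mxE.
  rewrite !big_distrl /=; apply: eq_bigr => i _; rewrite !mxE hM; ring.
nra.
Qed.

Lemma S_V1 v : Sset v -> V1 f c v.
Proof.
move=> [x hK hfx].
pose y : mvec R n (d0 f c) := fun a => ('X_[a : 'X_{1..n}]).@[x].
have hpair q : (msize q <= (2 * d0 f c).+1)%N -> mpair q y = q.@[x].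
  move=> hq; rewrite [in RHS](mpolywE hq) raddf_sum /=; apply: eq_bigr => a _.
  by rewrite mevalZ.
exists y; split.
- by rewrite /mzero /y /= mpolyX0 meval1.
- apply: (psd_rank1 (w := fun i => ('X_[(enum_val i : 'X_{1..n < (d0 f c).+1}) : 'X_{1..n}]).@[x])).
  move=> i j; rewrite mxE /y /madd_idx insubdK ?mpolyXD ?mevalM //.
  rewrite -topredE /= mdegD; have := bmdeg (enum_val i); have := bmdeg (enum_val j).
  move: (mdeg _) (mdeg _) => a b; lia.
- by move=> j; rewrite hpair ?msize_c //; apply: hK.
- by move=> i; rewrite hpair ?msize_f //; apply: hfx.
Qed.

Lemma S_open v : Sset v -> exists2 e : R, 0 < e & forall w, box v e w -> Sset w.
Proof.
move=> [x hK hfx].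
exists (\big[Order.min/(1:R)]_i (v i - fval f x i)).
  by apply: lt_bigmin => // i _; rewrite subr_gt0.
move=> w hw; exists x => // i.
have h1 := bigmin_le (1:R) i (fun i => v i - fval f x i).
have := hw i; rewrite ltr_norml => /andP[h2 _].
move: h1 h2; set e := \big[_/_]_i _; lra.
Qed.

Lemma interior_S v : interiorR (Uset f c) v <-> Sset v.
Proof.
split.
- move=> [e e0 H].
  have [x hK hx] : Uset f c (fun i => v i - e / 2).
    apply: H => i; have -> : v i - e / 2 - v i = - (e / 2) by ring.
    rewrite normrN ger0_norm; lra.
  by exists x => // i; have := hx i; lra.
- move=> hS; have [e e0 H] := S_open hS; exists e => // w /H [x hK hx].
  by exists x => // i; apply/ltW.
Qed.

Lemma interior_cl_S (hf : forall i, sos_convex (f i)) (hc : forall j, sos_convex (- c j)) v :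
  interiorR (closureR (V1 f c)) v <-> Sset v.
Proof.
split.
- move=> [e e0 H].
  have /(_ (e / 2)) [|w' [hb hV]] : closureR (V1 f c) (fun i => v i - e / 2).
    apply: H => i; have -> : v i - e / 2 - v i = - (e / 2) by ring.
    rewrite normrN ger0_norm; lra.
    lra.
  have [x hK hx] := V1_S hf hc hV.
  exists x => // i; have := hx i; have := hb i; rewrite ltr_norml => /andP[_ h2]; lra.
- move=> hS; have [e e0 H] := S_open hS; exists e => // w /H hw e' e'0.
  by exists w; split; [move=> i; rewrite subrr normr0 | apply: S_V1].
Qed.

Lemma closure2 (v : 'I_m -> R) x0 : Kset c x0 -> fval f x0 = v ->
  closureR (closureR (V1 f c)) v.
Proof.
move=> hK hv e e0; exists (fun i => v i + e / 2); split.
  move=> i; have -> : v i + e / 2 - v i = e / 2 by ring.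
  rewrite ger0_norm; lra.
move=> e' e'0; exists (fun i => v i + e / 2); split.
  by move=> i; rewrite subrr normr0.
apply: S_V1; exists x0 => // i; rewrite hv; lra.
Qed.
End Main.

Unset Implicit Arguments.
Theorem theorem3p3 (R : realType) (n m p : nat)
    (f : 'I_m -> {mpoly R[n]}) (c : 'I_p -> {mpoly R[n]}) :
  (exists xK, interiorR (Kset c) xK) ->
  (forall i, sos_convex (f i)) ->
  (forall j, sos_convex (- c j)) ->
  (forall v, interiorR (Uset f c) v <-> V1 f c v) /\
  (forall v, (exists2 x, Kset c x & fval f x = v) ->
     (weakly_pareto_value f c v <-> boundaryR (closureR (V1 f c)) v)).
Proof.
move=> _ hf hc; split.
  move=> v; rewrite interior_S; split; [exact: S_V1 | exact: V1_S].
move=> v [x0 hK0 hv]; split.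
- move=> [xs [hKs hno] hxs]; split; first exact: closure2 hK0 hv.
  move/(interior_cl_S hf hc) => [x hK hx]; apply: hno; exists x => //.
  by rewrite hxs.
- move=> [_ hni]; exists x0 => //; split => // [[x hK hx]].
  apply: hni; apply/(interior_cl_S hf hc); exists x => //.
  by rewrite -hv.
Qed.
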